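(* Let $t$ be a positive integer and let $G$ be a graph on $4t-1$ vertices with $\alpha(G)=2$ and $\mathrm{cm}(G)\le t-1$. Then for any triangle $v_1v_2v_3v_1$ in $G$, we have $\left|N(v_1)\cap N(v_2)\cap N(v_3)\right|\ge t+2$.
   Context: All graphs are finite and simple. $\alpha(G)$ is the independence number; $N(v)$ is the set of neighbours of $v$. A matching $M$ in $G$ is connected if for every two edges of $M$ there is an edge of $G$ joining an endpoint of one to an endpoint of the other; $\mathrm{cm}(G)$ is the maximum size of a connected matching in $G$. *)

(* Defs.v *)
From mathcomp Require Import all_boot all_order.
Set Implicit Arguments. Unset Strict Implicit. Unset Printing Implicit Defensive.

Definition simple_graph (T : finType) (e : rel T) : Prop :=
  symmetric e /\ irreflexive e.

Definition independent (T : finType) (e : rel T) (S : {set T}) : bool :=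
  [forall x in S, forall y in S, ~~ e x y].

Definition alpha (T : finType) (e : rel T) : nat :=
  \max_(S : {set T} | independent e S) #|S|.

Definition is_edge (T : finType) (e : rel T) (A : {set T}) : bool :=
  [exists x, exists y, (A == [set x; y]) && e x y].

Definition matching (T : finType) (e : rel T) (M : {set {set T}}) : bool :=
  [forall A in M, is_edge e A] &&
  [forall A in M, forall B in M, (A != B) ==> [disjoint A & B]].

Definition connected_matching (T : finType) (e : rel T) (M : {set {set T}}) : bool :=
  matching e M &&
  [forall A in M, forall B in M,
     (A != B) ==> [exists a in A, exists b in B, e a b]].

Definition cm (T : finType) (e : rel T) : nat :=
  \max_(M : {set {set T}} | connected_matching e M) #|M|.

Definition nbhd (T : finType) (e : rel T) (v : T) : {set T} := [set u | e v u].

(* Main.v *)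
Require Import Defs.
From mathcomp Require Import all_boot all_order.
From mathcomp Require Import zify.
Set Implicit Arguments. Unset Strict Implicit. Unset Printing Implicit Defensive.

Definition clq (T : finType) (e : rel T) (Q : {set T}) : Prop :=
  forall x y, x \in Q -> y \in Q -> x != y -> e x y.

Lemma no_indep3 (T : finType) (e : rel T) :
  simple_graph e -> alpha e = 2 ->
  forall a b c, a != b -> a != c -> b != c ->
  ~~ e a b -> ~~ e a c -> ~~ e b c -> False.
Proof.
move=> [sym irr] al a b c ab ac bc eab eac ebc.
have ind : independent e [set a; b; c].
  apply/forallP => x; apply/implyP => Hx; apply/forallP => y; apply/implyP => Hy.
  move: Hx Hy; rewrite !inE => /orP [/orP [/eqP -> | /eqP ->] | /eqP ->]
    /orP [/orP [/eqP -> | /eqP ->] | /eqP ->];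
    rewrite ?irr // ?eab ?eac ?ebc // sym ?eab ?eac ?ebc //.
have := @leq_bigmax_cond _ (fun S : {set T} => independent e S) (fun S : {set T} => #|S|) _ ind.
rewrite -/(alpha e) al.
rewrite -setUA cardsU1 cards2 bc !inE negb_or ab ac.
by [].
Qed.

Lemma cm_ge (T : finType) (e : rel T) (M : {set {set T}}) :
  connected_matching e M -> #|M| <= cm e.
Proof. move=> H; exact: (@leq_bigmax_cond _ (fun M : {set {set T}} => connected_matching e M) (fun M : {set {set T}} => #|M|) _ H). Qed.

Lemma disjI (T : finType) (A B : {set T}) :
  (forall z, z \in A -> z \in B -> False) -> [disjoint A & B].
Proof.
move=> H; rewrite disjoints_subset; apply/subsetP => z zA; rewrite inE.
by apply/negP => zB; exact: H zA zB.
Qed.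

Definition good (T : finType) (e : rel T) (K S : {set T}) (M : {set {set T}}) : Prop :=
  [/\ (forall A, A \in M -> exists x y, A = [set x; y] /\ e x y),
      (forall A B, A \in M -> B \in M -> A != B -> [disjoint A & B]),
      (forall A, A \in M -> A \subset S) &
      (forall A, A \in M -> exists2 k, k \in A & k \in K)].

Lemma good_cm (T : finType) (e : rel T) K S M :
  clq e K -> good e K S M -> connected_matching e M.
Proof.
move=> cK [H1 H2 H3 H4].
have mat : matching e M.
  apply/andP; split.
    apply/forallP => A; apply/implyP => HA.
    have [x [y [-> exy]]] := H1 A HA.
    by apply/existsP; exists x; apply/existsP; exists y; rewrite eqxx exy.
  apply/forallP => A; apply/implyP => HA; apply/forallP => B; apply/implyP => HB.
  by apply/implyP => AB; apply: H2.
apply/andP; split => //.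
apply/forallP => A; apply/implyP => HA; apply/forallP => B; apply/implyP => HB.
apply/implyP => AB.
have [a aA aK] := H4 A HA; have [b bB bK] := H4 B HB.
have ab : a != b.
  apply/eqP => eab; subst b.
  by move: (disjointFr (H2 A B HA HB AB) aA); rewrite bB.
apply/existsP; exists a; rewrite aA /=; apply/existsP; exists b; rewrite bB /=.
exact: cK.
Qed.

Lemma good0 (T : finType) (e : rel T) K S : good e K S set0.
Proof. by split => A; rewrite inE. Qed.

Lemma good_add (T : finType) (e : rel T) (K S S' : {set T}) M x y :
  good e K S' M -> S' \subset S -> x \in S -> y \in S -> x \notin S' -> y \notin S' ->
  e x y -> (x \in K) ->
  good e K S ([set x; y] |: M) /\ #|[set x; y] |: M| = #|M|.+1.
Proof.
move=> [H1 H2 H3 H4] sS xS yS xS' yS' exy xK.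
have disj : forall A, A \in M -> [disjoint [set x; y] & A].
  move=> A HA; apply: disjI => z; rewrite !inE => /orP [] /eqP -> zA.
    by move: (subsetP (H3 A HA) x zA); rewrite (negbTE xS').
  by move: (subsetP (H3 A HA) y zA); rewrite (negbTE yS').
have nin : [set x; y] \notin M.
  apply/negP => HM; have := disj _ HM.
  have xx : x \in [set x; y] by rewrite !inE eqxx.
  by move/disjointFr/(_ xx); rewrite xx.
split; last by rewrite cardsU1 nin.
split.
- move=> A; rewrite in_setU1 => /orP [/eqP -> | HA]; first by exists x, y.
  exact: H1.
- move=> A B; rewrite !in_setU1 => /orP [/eqP -> | HA] /orP [/eqP -> | HB] AB.
  + by rewrite eqxx in AB.
  + exact: disj.
  + by rewrite disjoint_sym; apply: disj.
  + exact: H2.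
- move=> A; rewrite in_setU1 => /orP [/eqP -> | HA].
    by apply/subsetP => z; rewrite !inE => /orP [] /eqP ->.
  exact: subset_trans (H3 A HA) sS.
- move=> A; rewrite in_setU1 => /orP [/eqP -> | HA]; last exact: H4.
  by exists x; rewrite // !inE eqxx.
Qed.

Lemma good_mono (T : finType) (e : rel T) (K1 K2 S1 S2 : {set T}) M :
  K1 \subset K2 -> S1 \subset S2 -> good e K1 S1 M -> good e K2 S2 M.
Proof.
move=> sK sS [H1 H2 H3 H4]; split => // A HA.
  exact: subset_trans (H3 A HA) sS.
by have [k kA kK] := H4 A HA; exists k => //; apply: (subsetP sK).
Qed.

Lemma clq_sub (T : finType) (e : rel T) (K K' : {set T}) :
  K' \subset K -> clq e K -> clq e K'.
Proof. by move=> s cK x y xK yK; apply: cK; apply: (subsetP s). Qed.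

Lemma pairs (T : finType) (e : rel T) j : forall (K : {set T}),
  clq e K -> 2 * j <= #|K| -> exists M, good e K K M /\ #|M| = j.
Proof.
elim: j => [|j IH] K cK hK.
  by exists set0; split; [exact: good0 | rewrite cards0].
have : 0 < #|K| by lia.
move=> /card_gt0P [x xK].
have hK1 : #|K| = #|K :\ x|.+1 by rewrite (cardsD1 x K) xK.
have : 0 < #|K :\ x| by lia.
move=> /card_gt0P [y yK1].
have hK2 : #|K :\ x| = #|K :\ x :\ y|.+1 by rewrite (cardsD1 y (K :\ x)) yK1.
have sK' : K :\ x :\ y \subset K.
  by apply/subsetP => z; rewrite !inE => /andP [_ /andP [_ ->]].
have [M' [gM' cM']] := IH (K :\ x :\ y) (clq_sub sK' cK) ltac:(lia).
have yK : y \in K by move: yK1; rewrite !inE => /andP [].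
have xy : x != y by move: yK1; rewrite !inE => /andP [] ; rewrite eq_sym.
have [g c] := good_add (S := K) (x := x) (y := y) (good_mono sK' (subxx _) gM') sK' xK yK
  ltac:(by rewrite !inE eqxx /= andbF) ltac:(by rewrite !inE eqxx) (cK x y xK yK xy) xK.
by exists ([set x; y] |: M'); split => //; rewrite c cM'.
Qed.

Lemma touch (T : finType) (e : rel T) (t : nat) :
  simple_graph e -> alpha e = 2 -> forall j (K R : {set T}),
  clq e K -> [disjoint K & R] -> j <= #|K| -> 2 * j + 2 * t - 1 <= #|K| + #|R| ->
  (exists M, good e K (K :|: R) M /\ #|M| = j) \/ (exists Q, clq e Q /\ 2 * t <= #|Q|).
Proof.
move=> sg al; elim => [|j IH] K R cK dKR hj hs.
  by left; exists set0; split; [exact: good0 | rewrite cards0].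
have [[x y] /= /andP [/andP [xK yR] exy] | none] :=
  pickP [pred p : T * T | (p.1 \in K) && (p.2 \in R) && e p.1 p.2].
  have hK1 : #|K| = #|K :\ x|.+1 by rewrite (cardsD1 x K) xK.
  have hR1 : #|R| = #|R :\ y|.+1 by rewrite (cardsD1 y R) yR.
  have sK' : K :\ x \subset K by apply/subsetP => z; rewrite !inE => /andP [_ ->].
  have sR' : R :\ y \subset R by apply/subsetP => z; rewrite !inE => /andP [_ ->].
  have d' : [disjoint K :\ x & R :\ y].
    apply: disjI => z zK zR.
    by move: (disjointFr dKR (subsetP sK' z zK)); rewrite (subsetP sR' z zR).
  have [[M' [gM' cM']] | Q] := IH (K :\ x) (R :\ y) (clq_sub sK' cK) d' ltac:(lia) ltac:(lia); last by right.
  have xR : x \notin R by rewrite (disjointFr dKR xK).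
  have yK : y \notin K by rewrite (disjointFl dKR yR).
  have sS : (K :\ x) :|: (R :\ y) \subset K :|: R by apply: setUSS.
  have [g c] := good_add (S := K :|: R) (x := x) (y := y) (good_mono sK' (subxx _) gM') sS
    ltac:(by rewrite in_setU xK) ltac:(by rewrite in_setU yR orbT)
    ltac:(by rewrite !inE eqxx /= (negbTE xR) ?andbF)
    ltac:(by rewrite !inE eqxx (negbTE yK) /= ?andbF)
    exy xK.
  by left; exists ([set x; y] |: M'); split => //; rewrite c cM'.
have [big | small] := leqP (2 * j.+1) #|K|.
  have [M [g c]] := pairs cK big.
  by left; exists M; split => //; apply: good_mono g => //; apply: subsetUl.
right; exists R; split; last by lia.
have : 0 < #|K| by lia.
move=> /card_gt0P [x xK].
move=> y y' yR y'R yy'; apply/negPn/negP => nyy'.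
have nxy : forall z, z \in R -> ~~ e x z.
  by move=> z zR; move: (none (x, z)); rewrite /= xK zR /= => ->.
have xz : forall z, z \in R -> x != z.
  by move=> z zR; apply/eqP => exz; subst z; move: (disjointFr dKR xK); rewrite zR.
exact: (no_indep3 sg al (xz y yR) (xz y' y'R) yy' (nxy y yR) (nxy y' y'R) nyy').
Qed.

Lemma key (T : finType) (e : rel T) (t : nat) :
  simple_graph e -> 0 < t -> #|T| = 4 * t - 1 -> alpha e = 2 -> cm e <= t - 1 ->
  forall K : {set T}, clq e K -> #|K| <= t - 1.
Proof.
move=> sg t0 nT al hcm K cK; rewrite leqNgt; apply/negP => big.
have dK : [disjoint K & ~: K] by rewrite disjoints_subset setCK.
have := cardsC K; rewrite nT => hc.
have [[M [g c]] | [Q [cQ hQ]]] := @touch T e t sg al t K (~: K) cK dK ltac:(lia) ltac:(lia).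
  by have := cm_ge (good_cm cK g); lia.
have [M [g c]] := pairs cQ hQ.
by have := cm_ge (good_cm cQ g); lia.
Qed.

Lemma cardU_le (T : finType) (A B : {set T}) : #|A :|: B| <= #|A| + #|B|.
Proof. by rewrite -cardsUI leq_addr. Qed.

Definition Anb (T : finType) (e : rel T) (a : T) : {set T} :=
  [set x | (x != a) && ~~ e a x].

Arguments clq_sub {T e K K'} _ _.

Lemma clq_A (T : finType) (e : rel T) a :
  simple_graph e -> alpha e = 2 -> clq e (Anb e a).
Proof.
move=> sg al x y; rewrite !inE => /andP [xa nax] /andP [ya nay] xy.
apply/negPn/negP => nxy.
by apply: (no_indep3 sg al _ _ xy nax nay nxy); rewrite eq_sym.
Qed.

Arguments clq_A {T e} a _ _.

Lemma notA (T : finType) (e : rel T) a x :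
  x \notin Anb e a -> x != a -> e a x.
Proof. rewrite inE negb_and !negbK => /orP [/eqP -> | -> //]; by rewrite eqxx. Qed.

Lemma clq_add (T : finType) (e : rel T) (Q : {set T}) v :
  symmetric e -> clq e Q -> (forall x, x \in Q -> x != v -> e v x) -> clq e (v |: Q).
Proof.
move=> sym cQ hv x y; rewrite !in_setU1.
case: (eqVneq x v) => [-> | xv] /=; case: (eqVneq y v) => [-> | yv] //=.
- by move=> _ yQ _; apply: hv.
- by move=> xQ _ _; rewrite sym; apply: hv.
- by move=> xQ yQ; apply: cQ.
Qed.

Arguments clq_add {T e Q} v _ _ _.

Lemma case2 (T : finType) (e : rel T) (t : nat) :
  simple_graph e -> 0 < t -> #|T| = 4 * t - 1 -> alpha e = 2 -> cm e <= t - 1 ->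
  forall a b c, e a b -> e b c -> e a c ->
  Anb e b :&: Anb e c \subset Anb e a ->
  forall D : {set T}, (forall y, y \in D -> ~~ e a y || ~~ e b y || ~~ e c y) ->
  #|D| <= 3 * (t - 1).
Proof.
move=> sg t0 nT al hcm a b c eab ebc eac sub D hD.
have [sym irr] := sg.
have K := key sg t0 nT al hcm.
have inA : forall v x, x \in Anb e v -> (x != v) && ~~ e v x by move=> v x; rewrite inE.
set Qb := a |: (c |: (Anb e b :\: Anb e a)).
set Qc := b |: (Anb e c :\: Anb e a :\: Anb e b).
have cQb : clq e Qb.
  apply: clq_add => //.
    apply: clq_add => //.
      by apply: (clq_sub _ (clq_A b sg al)); apply/subsetP => z; rewrite in_setD => /andP [_ ->].
    move=> x; rewrite inE => /andP [xa xb] xc.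
    apply: notA => //; apply/negP => xc'.
    by move: (subsetP sub x); rewrite inE xb xc' (negbTE xa) => /(_ isT).
  move=> x; rewrite in_setU1 => /orP [/eqP -> _ // | ].
  by rewrite in_setD => /andP [xna xb] xa; apply: notA.
have cQc : clq e Qc.
  apply: clq_add => //.
    apply: (clq_sub _ (clq_A c sg al)).
    by apply/subsetP => z; rewrite !inE => /andP [_ /andP [_ ->]].
  by move=> x; rewrite inE => /andP [xb _] xneb; apply: notA.
have sD : D \subset Anb e a :|: Qb :|: Qc.
  apply/subsetP => y yD; have := hD y yD; rewrite /Qb /Qc !in_setU !in_set1 !in_setD.
  case: (boolP (y \in Anb e a)) => ya //=.
  case: (boolP (y \in Anb e b)) => yb; rewrite ?orbT //=.
  case: (boolP (y \in Anb e c)) => yc; rewrite ?orbT //=.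
  case: (eqVneq y a) => [// | ya'] /=.
  case: (eqVneq y b) => [// | yb'] /=; rewrite ?orbT //.
  case: (eqVneq y c) => [// | yc'] /=; rewrite ?orbT //.
  by rewrite (notA ya ya') (notA yb yb') (notA yc yc').
have := subset_leq_card sD.
have := cardU_le (Anb e a :|: Qb) Qc; have := cardU_le (Anb e a) Qb.
have := K _ (clq_A a sg al); have := K _ cQb; have := K _ cQc.
lia.
Qed.

Theorem lemma2p2 (T : finType) (e : rel T) (t : nat) :
  simple_graph e -> 0 < t -> #|T| = 4 * t - 1 ->
  alpha e = 2 -> cm e <= t - 1 ->
  forall v1 v2 v3 : T, e v1 v2 -> e v2 v3 -> e v1 v3 ->
  t + 2 <= #|nbhd e v1 :&: nbhd e v2 :&: nbhd e v3|.
Proof.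
move=> sg t0 nT al hcm v1 v2 v3 e12 e23 e13.
have [sym irr] := sg.
set C := nbhd e v1 :&: nbhd e v2 :&: nbhd e v3.
have hc := cardsC C; rewrite nT in hc.
suff : #|~: C| <= 3 * (t - 1) by lia.
have hD : forall y, y \in ~: C -> ~~ e v1 y || ~~ e v2 y || ~~ e v3 y.
  move=> y; rewrite !inE; case: (e v1 y); case: (e v2 y); case: (e v3 y) => //.
have c2 := case2 sg t0 nT al hcm.
set A1 := Anb e v1; set A2 := Anb e v2; set A3 := Anb e v3.
case: (boolP (A1 :&: A2 \subset A3)) => [s12 | /subsetPn [x12 x12in _]].
  apply: (c2 v3 v1 v2) => //; try by rewrite sym.
  by move=> y /hD; case: (e v1 y); case: (e v2 y); case: (e v3 y).
case: (boolP (A1 :&: A3 \subset A2)) => [s13 | /subsetPn [x13 x13in x13n]].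
  apply: (c2 v2 v1 v3) => //; try by rewrite sym.
  by move=> y /hD; case: (e v1 y); case: (e v2 y); case: (e v3 y).
case: (boolP (A2 :&: A3 \subset A1)) => [s23 | /subsetPn [x23 x23in x23n]].
  by apply: (c2 v1 v2 v3).
have K := key sg t0 nT al hcm.
have k1 : #|A1| <= t - 1 := K _ (clq_A v1 sg al).
have k2 : #|A2| <= t - 1 := K _ (clq_A v2 sg al).
have k3 : #|A3| <= t - 1 := K _ (clq_A v3 sg al).
have i12 : 0 < #|A1 :&: A2| by apply/card_gt0P; exists x12.
have i3 : 2 <= #|(A1 :|: A2) :&: A3|.
  have neq : x13 != x23.
    by apply/eqP => eq; subst x23; move: x13in x23n; rewrite inE => /andP [-> _].
  have : [set x13; x23] \subset (A1 :|: A2) :&: A3.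
    apply/subsetP => z; rewrite !inE => /orP [] /eqP ->.
      by move: x13in; rewrite !inE => /andP [-> ->].
    by move: x23in; rewrite !inE => /andP [-> ->]; rewrite orbT.
  by move/subset_leq_card; rewrite cards2 neq.
have u1 := cardsUI A1 A2; have u2 := cardsUI (A1 :|: A2) A3.
have sD : ~: C \subset (A1 :|: A2 :|: A3) :|: ([set v1; v2] :|: [set v3]).
  apply/subsetP => y /hD; rewrite !in_setU !in_set1 /A1 /A2 /A3 !inE.
  case: (eqVneq y v1) => [-> | n1]; rewrite ?orbT //=.
  case: (eqVneq y v2) => [-> | n2]; rewrite ?orbT //=.
  case: (eqVneq y v3) => [-> | n3]; rewrite ?orbT //=.
  by case: (e v1 y); case: (e v2 y); case: (e v3 y).
have := subset_leq_card sD.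
have := cardU_le (A1 :|: A2 :|: A3) ([set v1; v2] :|: [set v3]).
have := cardU_le [set v1; v2] [set v3]; rewrite cards1.
have : #|[set v1; v2]| <= 2 by rewrite cards2; case: (v1 != v2).
lia.
Qed.
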